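(* Let $D:\mathbb R^2\setminus\{0\}\to\mathbb R$ be nonnegative, bounded and continuously differentiable, and consider $\ddot x+D(x)\dot x=-x/|x|^3$. Every rectilinear solution $x_*:[-T,0]\to\mathbb R^2\setminus\{0\}$ of this equation is nondegenerate.
   Context: A solution is rectilinear if it has the form $x_*(t)=r_*(t)w_0$ with $w_0$ a fixed unit vector and $r_*>0$. A solution $x_*:[-T,0]\to\mathbb R^2\setminus\{0\}$ is called nondegenerate if the only solution $w:[-T,0]\to\mathbb R^2$ of the variational equation $$\ddot w+\langle\nabla D(x_*(t)),w\rangle\dot x_*(t)+D(x_*(t))\dot w=-\frac{1}{|x_*(t)|^3}w+3\frac{\langle x_*(t),w\rangle}{|x_*(t)|^5}x_*(t)$$ with $w(-T)=0=w(0)$ is $w\equiv0$. *)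

(* Defs.v *)
From Stdlib Require Import Reals.
From Coquelicot Require Import Coquelicot.
Open Scope R_scope.


Definition nrm (p : R * R) : R := sqrt (fst p ^ 2 + snd p ^ 2).
Definition dot (p q : R * R) : R := fst p * fst q + snd p * snd q.

(* g is the derivative of f on the closed interval [a,b]
   (one-sided at the endpoints): the difference quotient, restricted to
   increments keeping t+h in [a,b], converges to g t. *)
Definition deriv_on (a b : R) (f g : R -> R) : Prop :=
  forall t, a <= t <= b ->
    filterlim (fun h => (f (t + h) - f t) / h)
      (within (fun h => h <> 0 /\ a <= t + h <= b) (locally 0))
      (locally (g t)).

Definition vderiv_on (a b : R) (f g : R -> R * R) : Prop :=
  deriv_on a b (fun t => fst (f t)) (fun t => fst (g t)) /\
  deriv_on a b (fun t => snd (f t)) (fun t => snd (g t)).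

Definition C1_punctured (D D1 D2 : R * R -> R) : Prop :=
  forall p : R * R, p <> (0, 0) ->
    is_derive (fun s => D (s, snd p)) (fst p) (D1 p) /\
    is_derive (fun s => D (fst p, s)) (snd p) (D2 p) /\
    continuous D1 p /\ continuous D2 p.

Definition is_solution (D : R * R -> R) (T : R) (x : R -> R * R) : Prop :=
  (forall t, -T <= t <= 0 -> x t <> (0, 0)) /\
  exists v a : R -> R * R,
    vderiv_on (-T) 0 x v /\ vderiv_on (-T) 0 v a /\
    forall t, -T <= t <= 0 ->
      fst (a t) + D (x t) * fst (v t) = - fst (x t) / nrm (x t) ^ 3 /\
      snd (a t) + D (x t) * snd (v t) = - snd (x t) / nrm (x t) ^ 3.

Definition rectilinear (T : R) (x : R -> R * R) : Prop :=
  exists (w0 : R * R) (r : R -> R),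
    nrm w0 = 1 /\
    forall t, -T <= t <= 0 -> 0 < r t /\ x t = (r t * fst w0, r t * snd w0).

Definition variational_eq (D D1 D2 : R * R -> R) (T : R)
    (x v w w' w'' : R -> R * R) : Prop :=
  forall t, -T <= t <= 0 ->
    let gw := D1 (x t) * fst (w t) + D2 (x t) * snd (w t) in
    fst (w'' t) + gw * fst (v t) + D (x t) * fst (w' t)
      = - fst (w t) / nrm (x t) ^ 3
        + 3 * dot (x t) (w t) / nrm (x t) ^ 5 * fst (x t) /\
    snd (w'' t) + gw * snd (v t) + D (x t) * snd (w' t)
      = - snd (w t) / nrm (x t) ^ 3
        + 3 * dot (x t) (w t) / nrm (x t) ^ 5 * snd (x t).

Definition nondegenerate (D D1 D2 : R * R -> R) (T : R) (x : R -> R * R) : Prop :=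
  forall v : R -> R * R, vderiv_on (-T) 0 x v ->
  forall w w' w'' : R -> R * R,
    vderiv_on (-T) 0 w w' -> vderiv_on (-T) 0 w' w'' ->
    variational_eq D D1 D2 T x v w w' w'' ->
    w (-T) = (0, 0) -> w 0 = (0, 0) ->
    forall t, -T <= t <= 0 -> w t = (0, 0).

(* Main.v *)
Require Import Defs.
From Stdlib Require Import Reals Lra.
From Coquelicot Require Import Coquelicot.
Open Scope R_scope.

Lemma ball_R (x e y : R) : ball x e y <-> Rabs (y - x) < e.
Proof. unfold ball; simpl; unfold AbsRing_ball, abs, minus, plus, opp; simpl. tauto. Qed.

Lemma lim_R {F : (R -> Prop) -> Prop} {FF : Filter F} (f : R -> R) l :
  filterlim f F (locally l) <-> forall eps : posreal, F (fun x => Rabs (f x - l) < eps).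
Proof.
  rewrite filterlim_locally. split; intros H eps; apply (filter_imp _ _ (fun x h => proj1 (ball_R _ _ _) h) (H eps)) || apply (filter_imp _ _ (fun x h => proj2 (ball_R _ _ _) h) (H eps)).
Qed.

Section Lims.
Context {F : (R -> Prop) -> Prop} {FF : Filter F}.
Lemma lim_plus (f g : R -> R) (lf lg : R) : filterlim f F (locally lf) -> filterlim g F (locally lg) ->
  filterlim (fun x => f x + g x) F (locally (lf + lg)).
Proof. intros Hf Hg. exact (filterlim_comp_2 f g Rplus Hf Hg (@filterlim_plus R_AbsRing R_NormedModule lf lg)). Qed.
Lemma lim_mult (f g : R -> R) (lf lg : R) : filterlim f F (locally lf) -> filterlim g F (locally lg) ->
  filterlim (fun x => f x * g x) F (locally (lf * lg)).
Proof. intros Hf Hg. exact (filterlim_comp_2 f g Rmult Hf Hg (@filterlim_mult R_AbsRing lf lg)). Qed.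
Lemma lim_const (c : R) : filterlim (fun _ : R => c) F (@locally R_UniformSpace c).
Proof. apply filterlim_const. Qed.
Lemma lim_ext (f g : R -> R) (l : R) : F (fun x => f x = g x) -> filterlim f F (locally l) -> filterlim g F (locally l).
Proof. apply filterlim_ext_loc. Qed.
Lemma lim_eq (f : R -> R) (l l' : R) : l = l' -> filterlim f F (locally l) -> filterlim f F (locally l').
Proof. intros ->; auto. Qed.
End Lims.

Definition Fw a b t := within (fun h => h <> 0 /\ a <= t + h <= b) (locally 0).
Global Instance Fw_filter a b t : Filter (Fw a b t).
Proof. unfold Fw. apply within_filter, locally_filter. Qed.

Lemma Fw_in a b t : Fw a b t (fun h => h <> 0 /\ a <= t + h <= b).
Proof. unfold Fw, within. apply filter_forall. auto. Qed.

Lemma lim_h a b t : filterlim (fun h => h) (Fw a b t) (locally 0).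
Proof. apply (filterlim_filter_le_1 _ (@filter_le_within _ (locally (0:R)) _ _)), filterlim_id. Qed.

Lemma deriv_cont_lim a b f g t : deriv_on a b f g -> a <= t <= b ->
  filterlim (fun h => f (t + h)) (Fw a b t) (locally (f t)).
Proof.
  intros H Ht. specialize (H t Ht).
  apply (lim_ext (fun h => f t + h * ((f (t + h) - f t) / h))).
  - refine (filter_imp _ _ _ (Fw_in a b t)). intros h [Hh _]. simpl. field. exact Hh.
  - apply (lim_eq _ (f t + 0 * g t)); [ring|].
    apply lim_plus; [apply lim_const|]. apply lim_mult; [apply lim_h|exact H].
Qed.

Lemma Fw_imp a b t (P : R -> Prop) : (forall h, h <> 0 -> a <= t + h <= b -> P h) -> Fw a b t P.
Proof. intros H. refine (filter_imp _ _ _ (Fw_in a b t)). intros h [? ?]; auto. Qed.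

Lemma deriv_ext a b f g f2 g2 : deriv_on a b f g ->
  (forall t, a <= t <= b -> f t = f2 t) -> (forall t, a <= t <= b -> g t = g2 t) ->
  deriv_on a b f2 g2.
Proof.
  intros H Ef Eg t Ht. rewrite <- (Eg t Ht). fold (Fw a b t).
  apply (lim_ext (fun h => (f (t + h) - f t) / h)); [|apply H; auto].
  apply Fw_imp. intros h _ Hh. rewrite !Ef; auto.
Qed.

Lemma deriv_const a b c : deriv_on a b (fun _ => c) (fun _ => 0).
Proof.
  intros t Ht. fold (Fw a b t). apply (lim_ext (fun _ => 0)); [|apply lim_const].
  apply Fw_imp. intros h Hh _. field. auto.
Qed.

Lemma deriv_id a b : deriv_on a b (fun t => t) (fun _ => 1).
Proof.
  intros t Ht. fold (Fw a b t). apply (lim_ext (fun _ => 1)); [|apply lim_const].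
  apply Fw_imp. intros h Hh _. field. auto.
Qed.

Lemma deriv_plus a b f g f' g' : deriv_on a b f f' -> deriv_on a b g g' ->
  deriv_on a b (fun t => f t + g t) (fun t => f' t + g' t).
Proof.
  intros Hf Hg t Ht. fold (Fw a b t).
  apply (lim_ext (fun h => (f (t + h) - f t) / h + (g (t + h) - g t) / h)).
  - apply Fw_imp. intros h Hh _. field. auto.
  - apply lim_plus; [apply Hf|apply Hg]; auto.
Qed.

Lemma deriv_mult a b f g f' g' : deriv_on a b f f' -> deriv_on a b g g' ->
  deriv_on a b (fun t => f t * g t) (fun t => f' t * g t + f t * g' t).
Proof.
  intros Hf Hg t Ht. fold (Fw a b t).
  apply (lim_ext (fun h => (f (t + h) - f t) / h * g t + f (t + h) * ((g (t + h) - g t) / h))).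
  - apply Fw_imp. intros h Hh _. field. auto.
  - apply lim_plus. apply lim_mult; [apply Hf; auto|apply lim_const].
    apply lim_mult; [apply (deriv_cont_lim a b f f'); auto|apply Hg; auto].
Qed.

Lemma deriv_scal a b k f f' : deriv_on a b f f' ->
  deriv_on a b (fun t => k * f t) (fun t => k * f' t).
Proof.
  intros Hf. apply (deriv_ext a b (fun t => k * f t) (fun t => 0 * f t + k * f' t)).
  apply deriv_mult; auto. apply deriv_const. auto. intros; ring.
Qed.

Lemma deriv_chain (a b : R) (phi dphi f f' : R -> R) :
  (forall t, a <= t <= b -> is_derive phi (f t) (dphi t)) -> deriv_on a b f f' ->
  deriv_on a b (fun t => phi (f t)) (fun t => dphi t * f' t).
Proof.
  intros Hp Hf t Ht. fold (Fw a b t).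
  set (y := f t : R). set (l := dphi t : R).
  set (Phi := fun k : R => if Req_EM_T k 0 then l else (phi (y + k) - phi y) / k).
  assert (HP : filterlim Phi (locally 0) (locally l)).
  { apply lim_R. intros eps. destruct (proj1 (is_derive_Reals _ _ _) (Hp t Ht) eps (cond_pos eps)) as [d Hd].
    exists d. intros k Hk. unfold Phi. destruct (Req_EM_T k 0).
    - rewrite Rminus_diag, Rabs_R0. apply cond_pos.
    - pose proof (proj1 (ball_R _ _ _) Hk) as Hk'. rewrite Rminus_0_r in Hk'. apply Hd; auto. }
  apply (lim_ext (fun h => Phi (f (t + h) - y) * ((f (t + h) - f t) / h))).
  - apply Fw_imp. intros h Hh _. unfold Phi. destruct (Req_EM_T (f (t + h) - y) 0) as [E|E].
    + assert (f (t + h) = y) by lra. rewrite H. unfold y. rewrite Rminus_diag. field. auto.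
    + replace (y + (f (t + h) - y)) with (f (t + h)) by ring. fold y. field. auto.
  - apply lim_mult; [|apply Hf; auto].
    apply (filterlim_comp _ _ _ (fun h => f (t + h) - y) Phi _ (locally 0)); auto.
    apply (lim_eq _ (y + - y)); [ring|]. 
    apply (lim_ext (fun h => f (t + h) + - y)). apply filter_forall. intros; ring.
    apply lim_plus. apply deriv_cont_lim with f'; auto. apply lim_const.
Qed.

Lemma deriv_of_is_derive (a b : R) (phi dphi : R -> R) :
  (forall t, a <= t <= b -> is_derive phi t (dphi t)) -> deriv_on a b phi dphi.
Proof.
  intros H. apply (deriv_ext a b (fun t => phi t) (fun t => dphi t * 1)).
  apply deriv_chain; auto. apply deriv_id. auto. intros; ring.
Qed.

Lemma deriv_eps a b f g t : deriv_on a b f g -> a <= t <= b ->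
  forall eps, 0 < eps -> exists d, 0 < d /\ forall h, h <> 0 -> a <= t + h <= b -> Rabs h < d ->
    Rabs ((f (t + h) - f t) / h - g t) < eps.
Proof.
  intros H Ht eps He. specialize (H t Ht). fold (Fw a b t) in H.
  destruct (proj1 (lim_R _ _) H (mkposreal eps He)) as [d Hd].
  exists d. split; [apply cond_pos|]. intros h H1 H2 H3. apply (Hd h); [|auto].
  apply ball_R. rewrite Rminus_0_r. auto.
Qed.

Lemma real_ind (s b : R) (P : R -> Prop) : s <= b -> P s ->
  (forall y, s < y <= b -> (forall z, s <= z < y -> P z) -> P y) ->
  (forall y, s <= y < b -> (forall z, s <= z <= y -> P z) ->
     exists eta, 0 < eta /\ forall z, y < z < y + eta -> z <= b -> P z) ->
  forall z, s <= z <= b -> P z.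
Proof.
  intros Hsb Ps Hcl Hop.
  set (E := fun y => s <= y <= b /\ forall z, s <= z <= y -> P z).
  assert (Eb : bound E) by (exists b; intros y [Hy _]; lra).
  assert (Es : exists y, E y).
  { exists s. split; [lra|]. intros z Hz. replace z with s by lra. auto. }
  destruct (completeness E Eb Es) as [m [Hub Hl]].
  assert (Hsm : s <= m) by (apply Hub; destruct Es; split; [lra|]; intros z Hz; replace z with s by lra; auto).
  assert (Hmb : m <= b) by (apply Hl; intros y [Hy _]; lra).
  assert (Hbelow : forall z, s <= z < m -> P z).
  { intros z Hz. destruct (Classical_Prop.classic (P z)) as [|Hn]; auto. exfalso.
    assert (m <= z); [|lra]. apply Hl. intros y [Hy HP]. destruct (Rle_or_lt y z); auto.
    exfalso. apply Hn, HP. lra. }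
  assert (Pm : P m).
  { destruct (Req_dec m s) as [->|]; auto. apply Hcl; auto. lra. }
  assert (Em : forall z, s <= z <= m -> P z).
  { intros z Hz. destruct (Req_dec z m) as [->|]; auto. apply Hbelow. lra. }
  assert (m = b).
  { destruct (Req_dec m b); auto. exfalso.
    destruct (Hop m ltac:(lra) Em) as [eta [He Heta]].
    set (y := Rmin (m + eta / 2) b).
    assert (m < y) by (unfold y; apply Rmin_glb_lt; lra).
    assert (y <= b) by apply Rmin_r.
    assert (y <= m); [|lra]. apply Hub. split. lra.
    intros z Hz. destruct (Rle_or_lt z m). apply Em; lra.
    apply Heta. split; auto. assert (y <= m + eta/2) by apply Rmin_l. lra.
    assert (y <= b) by apply Rmin_r. lra. }
  subst m. auto.
Qed.

Lemma mono a b f g s t : deriv_on a b f g -> a <= s -> s <= t -> t <= b ->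
  (forall z, s <= z <= t -> 0 <= g z) -> f s <= f t.
Proof.
  intros Hd Has Hst Htb Hg.
  assert (forall eps, 0 < eps -> f s - eps * (t - s) <= f t); [|
    destruct (Rle_or_lt (f s) (f t)) as [|Hlt]; auto;
    destruct (Req_dec s t) as [<-|Hne]; [lra|];
    specialize (H ((f s - f t) / (2 * (t - s))));
    assert (0 < (f s - f t) / (2 * (t - s))) by (apply Rdiv_lt_0_compat; lra);
    specialize (H H0);
    assert ((f s - f t) / (2 * (t - s)) * (t - s) = (f s - f t) / 2) by (field; lra);
    lra].
  intros eps He.
  apply (real_ind s t (fun z => f s - eps * (z - s) <= f z)); auto; try lra.
  - intros y Hy Hb.
    destruct (deriv_eps a b f g y Hd ltac:(lra) (eps / 2) ltac:(lra)) as [d [Hd0 Hdd]].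
    set (h := - Rmin (d / 2) (y - s)).
    assert (Hh1 : 0 < Rmin (d / 2) (y - s)) by (apply Rmin_glb_lt; lra).
    assert (Hh2 : Rmin (d / 2) (y - s) <= d / 2) by apply Rmin_l.
    assert (Hh3 : Rmin (d / 2) (y - s) <= y - s) by apply Rmin_r.
    assert (Hq := Hdd h ltac:(unfold h; lra) ltac:(unfold h; lra) ltac:(unfold h; rewrite Rabs_Ropp, Rabs_pos_eq; lra)).
    assert (Hgy := Hg y ltac:(lra)).
    assert (Hfz := Hb (y + h) ltac:(unfold h; lra)).
    apply Rabs_def2 in Hq. destruct Hq as [Hq1 Hq2].
    set (q := (f (y + h) - f y) / h) in *.
    assert (f y = f (y + h) - q * h) by (unfold q; field; unfold h; lra).
    assert (h < 0) by (unfold h; lra). nra.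
  - intros y Hy Hb.
    destruct (deriv_eps a b f g y Hd ltac:(lra) (eps / 2) ltac:(lra)) as [d [Hd0 Hdd]].
    exists d. split; auto. intros z Hz Hzt.
    set (h := z - y).
    assert (Hq := Hdd h ltac:(unfold h; lra) ltac:(unfold h; lra) ltac:(unfold h; rewrite Rabs_pos_eq; lra)).
    assert (Hgy := Hg y ltac:(lra)).
    assert (Hfy := Hb y ltac:(lra)).
    apply Rabs_def2 in Hq. destruct Hq as [Hq1 Hq2].
    replace (y + h) with z in * by (unfold h; ring).
    set (q := (f z - f y) / h) in *.
    assert (f z = f y + q * h) by (unfold q; field; unfold h; lra).
    assert (h > 0) by (unfold h; lra). unfold h in *. nra.
Qed.

Definition contR a b f := forall t, a <= t <= b -> forall eps, 0 < eps ->
  exists eta, 0 < eta /\ forall z, a <= z <= b -> Rabs (z - t) < eta -> Rabs (f z - f t) < eps.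

Lemma deriv_contR a b f g : deriv_on a b f g -> contR a b f.
Proof.
  intros Hd t Ht eps He.
  destruct (deriv_eps a b f g t Hd Ht 1 ltac:(lra)) as [d [Hd0 Hdd]].
  set (K := Rabs (g t) + 1).
  assert (HK : 0 < K) by (unfold K; pose proof (Rabs_pos (g t)); lra).
  exists (Rmin d (eps / K)). split. apply Rmin_glb_lt; auto. apply Rdiv_lt_0_compat; auto.
  intros z Hz Hzt. destruct (Req_dec z t) as [->|Hne].
  - rewrite Rminus_diag, Rabs_R0. auto.
  - set (h := z - t) in *.
    assert (Hh : h <> 0) by (unfold h; lra).
    assert (Hq := Hdd h Hh ltac:(unfold h; lra) ltac:(apply (Rlt_le_trans _ _ _ Hzt), Rmin_l)).
    replace (t + h) with z in Hq by (unfold h; ring).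
    assert (E : f z - f t = ((f z - f t) / h) * h) by (field; auto).
    rewrite E, Rabs_mult.
    assert (Rabs ((f z - f t) / h) < K).
    { unfold K. pose proof (Rabs_triang_inv ((f z - f t) / h) (g t)). lra. }
    assert (Rabs h < eps / K) by (apply (Rlt_le_trans _ _ _ Hzt), Rmin_r).
    assert (Rabs h * K < eps).
    { apply (Rmult_lt_compat_r K) in H0; auto. replace (eps / K * K) with eps in H0 by (field; lra). auto. }
    pose proof (Rabs_pos h). pose proof (Rabs_pos ((f z - f t) / h)). nra.
Qed.

Lemma cont_ind_fwd a b f t0 : contR a b f -> a <= t0 <= b -> 0 < f t0 ->
  (forall y, t0 <= y <= b -> (forall z, t0 <= z <= y -> 0 <= f z) -> 0 < f y) ->
  forall z, t0 <= z <= b -> 0 < f z.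
Proof.
  intros Hc Ht0 Hf0 H.
  apply (real_ind t0 b (fun z => 0 < f z)); try lra; auto.
  - intros y Hy Hb. apply H; [lra|]. intros z Hz.
    destruct (Req_dec z y) as [->|]; [|apply Rlt_le, Hb; lra].
    destruct (Rle_or_lt 0 (f y)) as [|Hneg]; auto. exfalso.
    destruct (Hc y ltac:(lra) (- f y) ltac:(lra)) as [eta [He Hz']].
    set (z := Rmax t0 (y - eta / 2)).
    assert (t0 <= z) by apply Rmax_l. assert (y - eta/2 <= z) by apply Rmax_r.
    assert (z < y) by (apply Rmax_lub_lt; lra).
    assert (Hfz := Hb z ltac:(lra)).
    assert (Habs := Hz' z ltac:(lra) ltac:(rewrite Rabs_left; lra)).
    apply Rabs_def2 in Habs. lra.
  - intros y Hy Hb.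
    assert (Hfy := Hb y ltac:(lra)).
    destruct (Hc y ltac:(lra) (f y) Hfy) as [eta [He Hz']].
    exists eta. split; auto. intros z Hz Hzb.
    assert (Habs := Hz' z ltac:(lra) ltac:(rewrite Rabs_pos_eq; lra)).
    apply Rabs_def2 in Habs. lra.
Qed.

Lemma cont_ind_bwd a b f t0 : contR a b f -> a <= t0 <= b -> 0 < f t0 ->
  (forall y, a <= y <= t0 -> (forall z, y <= z <= t0 -> 0 <= f z) -> 0 < f y) ->
  forall z, a <= z <= t0 -> 0 < f z.
Proof.
  intros Hc Ht0 Hf0 H z Hz.
  replace z with (- - z) by ring.
  apply (cont_ind_fwd (- b) (- a) (fun u => f (- u)) (- t0)).
  - intros t Ht eps He. destruct (Hc (- t) ltac:(lra) eps He) as [eta [He' Hz']].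
    exists eta. split; auto. intros u Hu Hut. apply Hz'. lra.
    replace (- u - - t) with (- (u - t)) by ring. rewrite Rabs_Ropp. auto.
  - lra.
  - rewrite Ropp_involutive. auto.
  - intros y Hy Hb. apply H. lra. intros u Hu. replace u with (- - u) by ring. apply Hb. lra.
  - lra.
Qed.

Lemma deriv_unique a b f g1 g2 : a < b -> deriv_on a b f g1 -> deriv_on a b f g2 ->
  forall t, a <= t <= b -> g1 t = g2 t.
Proof.
  intros Hab H1 H2 t Ht.
  destruct (Req_dec (g1 t) (g2 t)) as [|Hne]; auto. exfalso.
  set (e := Rabs (g1 t - g2 t) / 2).
  assert (He : 0 < e) by (unfold e; apply Rdiv_lt_0_compat; [apply Rabs_pos_lt; lra|lra]).
  destruct (deriv_eps a b f g1 t H1 Ht e He) as [d1 [Hd1 Hq1]].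
  destruct (deriv_eps a b f g2 t H2 Ht e He) as [d2 [Hd2 Hq2]].
  set (m := Rmin d1 d2).
  assert (0 < m) by (apply Rmin_glb_lt; auto).
  assert (m <= d1) by apply Rmin_l. assert (m <= d2) by apply Rmin_r.
  assert (exists h, h <> 0 /\ a <= t + h <= b /\ Rabs h < m) as [h [Hh0 [Hh1 Hh2]]].
  { destruct (Rlt_or_le t b).
    - exists (Rmin (m / 2) (b - t)).
      assert (0 < Rmin (m / 2) (b - t)) by (apply Rmin_glb_lt; lra).
      assert (Rmin (m / 2) (b - t) <= m / 2) by apply Rmin_l.
      assert (Rmin (m / 2) (b - t) <= b - t) by apply Rmin_r.
      rewrite Rabs_pos_eq; lra.
    - exists (- Rmin (m / 2) (t - a)).
      assert (0 < Rmin (m / 2) (t - a)) by (apply Rmin_glb_lt; lra).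
      assert (Rmin (m / 2) (t - a) <= m / 2) by apply Rmin_l.
      assert (Rmin (m / 2) (t - a) <= t - a) by apply Rmin_r.
      rewrite Rabs_Ropp, Rabs_pos_eq; lra. }
  specialize (Hq1 h Hh0 Hh1 ltac:(lra)). specialize (Hq2 h Hh0 Hh1 ltac:(lra)).
  pose proof (Rabs_triang ((f (t + h) - f t) / h - g2 t) (g1 t - (f (t + h) - f t) / h)) as Htri.
  replace ((f (t + h) - f t) / h - g2 t + (g1 t - (f (t + h) - f t) / h)) with (g1 t - g2 t) in Htri by ring.
  rewrite <- Rabs_Ropp in Hq1. replace (- ((f (t + h) - f t) / h - g1 t)) with (g1 t - (f (t + h) - f t) / h) in Hq1 by ring.
  unfold e in *. lra.
Qed.

Lemma deriv_expM a b M : deriv_on a b (fun t => exp (M * t)) (fun t => exp (M * t) * (M * 1)).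
Proof.
  apply (deriv_chain a b exp (fun t => exp (M * t)) (fun t => M * t) (fun _ => M * 1)).
  intros; apply is_derive_exp. apply deriv_scal, deriv_id.
Qed.

Lemma step2_le a b (A A1 U d k : R -> R) M : a < b -> deriv_on a b A A1 ->
  deriv_on a b U (fun t => k t * A t) ->
  (forall t, a <= t <= b -> A1 t = U t - d t * A t) ->
  (forall t, a <= t <= b -> 0 <= d t <= M) ->
  (forall t, a <= t <= b -> 0 <= k t) -> A a = 0 -> A b = 0 ->
  forall t, a <= t <= b -> A t <= 0.
Proof.
  intros Hab HA HU HA1 Hd Hk Ha Hb t0 Ht0.
  destruct (Rle_or_lt (A t0) 0) as [|Hpos]; auto. exfalso.
  destruct (Rle_or_lt 0 (U t0)) as [HU0|HU0].
  - assert (Hall : forall z, t0 <= z <= b -> 0 < A z).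
    { apply (cont_ind_fwd a b A t0 (deriv_contR a b A A1 HA) Ht0 Hpos).
      intros y Hy HAy.
      assert (HUz : forall z, t0 <= z <= y -> U t0 <= U z).
      { intros z Hz. apply (mono a b U (fun t => k t * A t)); try lra; auto.
        intros w Hw. apply Rmult_le_pos; [apply Hk; lra|apply HAy; lra]. }
      pose proof (deriv_mult a b A (fun t => exp (M * t)) A1 _ HA (deriv_expM a b M)) as HE.
      assert (Hm := mono a b _ _ t0 y HE ltac:(lra) ltac:(lra) ltac:(lra)).
      simpl in Hm.
      assert (A t0 * exp (M * t0) <= A y * exp (M * y)).
      { apply Hm. intros z Hz. rewrite HA1 by lra.
        pose proof (exp_pos (M * z)). pose proof (HUz z Hz). pose proof (HAy z Hz).
        pose proof (Hd z ltac:(lra)).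
        replace ((U z - d z * A z) * exp (M * z) + A z * (exp (M * z) * (M * 1)))
          with ((U z + (M - d z) * A z) * exp (M * z)) by ring.
        apply Rmult_le_pos; [|lra]. nra. }
      pose proof (exp_pos (M * t0)). pose proof (exp_pos (M * y)).
      destruct (Rle_or_lt (A y) 0); auto. nra. }
    specialize (Hall b ltac:(lra)). lra.
  - assert (Hall : forall z, a <= z <= t0 -> 0 < A z).
    { apply (cont_ind_bwd a b A t0 (deriv_contR a b A A1 HA) Ht0 Hpos).
      intros y Hy HAy.
      assert (HUz : forall z, y <= z <= t0 -> U z <= U t0).
      { intros z Hz. apply (mono a b U (fun t => k t * A t)); try lra; auto.
        intros w Hw. apply Rmult_le_pos; [apply Hk; lra|apply HAy; lra]. }
      assert (Hm := mono a b _ _ y t0 (deriv_scal a b (-1) A A1 HA) ltac:(lra) ltac:(lra) ltac:(lra)).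
      simpl in Hm.
      assert (-1 * A y <= -1 * A t0); [|lra].
      apply Hm. intros z Hz. rewrite HA1 by lra.
      pose proof (HUz z Hz). pose proof (HAy z Hz). pose proof (Hd z ltac:(lra)). nra. }
    specialize (Hall a ltac:(lra)). lra.
Qed.

Lemma step2 a b (A A1 U d k : R -> R) M : a < b -> deriv_on a b A A1 ->
  deriv_on a b U (fun t => k t * A t) ->
  (forall t, a <= t <= b -> A1 t = U t - d t * A t) ->
  (forall t, a <= t <= b -> 0 <= d t <= M) ->
  (forall t, a <= t <= b -> 0 <= k t) -> A a = 0 -> A b = 0 ->
  forall t, a <= t <= b -> A t = 0.
Proof.
  intros Hab HA HU HA1 Hd Hk Ha Hb t Ht.
  pose proof (step2_le a b A A1 U d k M Hab HA HU HA1 Hd Hk Ha Hb t Ht).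
  assert (- A t <= 0); [|lra].
  apply (step2_le a b (fun t => - A t) (fun t => - A1 t) (fun t => - U t) d k M Hab); auto.
  - apply (deriv_ext a b (fun t => -1 * A t) (fun t => -1 * A1 t)); [apply deriv_scal; auto| |]; intros; ring.
  - apply (deriv_ext a b (fun t => -1 * U t) (fun t => -1 * (k t * A t))); [apply deriv_scal; auto| |]; intros; ring.
  - intros. rewrite HA1; auto; ring.
  - rewrite Ha; ring.
  - rewrite Hb; ring.
Qed.

Lemma between_abs u v x : Rmin u v <= x <= Rmax u v -> Rabs (x - u) <= Rabs (v - u).
Proof.
  intros [H1 H2]. unfold Rmin, Rmax in *. destruct (Rle_dec u v).
  - rewrite !Rabs_pos_eq; lra.
  - rewrite !Rabs_left1; lra.
Qed.

Lemma ray_deriv (D D1 D2 : R * R -> R) c s rho0 : C1_punctured D D1 D2 -> c ^ 2 + s ^ 2 = 1 -> 0 < rho0 ->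
  is_derive (fun rho => D (rho * c, rho * s)) rho0
    (D1 (rho0 * c, rho0 * s) * c + D2 (rho0 * c, rho0 * s) * s).
Proof.
  intros HC Hcs Hr. apply is_derive_Reals. intros eps He.
  set (p1 := rho0 * c). set (p2 := rho0 * s).
  assert (Hc1 : Rabs c <= 1) by (apply Rabs_le; split; nra).
  assert (Hs1 : Rabs s <= 1) by (apply Rabs_le; split; nra).
  assert (Hp : forall u w, Rabs (u - p1) <= Rabs (rho0 / 2) -> Rabs (w - p2) <= Rabs (rho0 / 2) -> (u, w) <> (0, 0)).
  { intros u w Hu Hw E. injection E as -> ->. rewrite (Rabs_pos_eq (rho0/2)) in Hu, Hw by lra.
    rewrite Rminus_0_l, Rabs_Ropp in Hu, Hw.
    assert (p1 ^ 2 <= (rho0/2)^2). { unfold Rabs in Hu; destruct (Rcase_abs p1); nra. }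
    assert (p2 ^ 2 <= (rho0/2)^2). { unfold Rabs in Hw; destruct (Rcase_abs p2); nra. }
    unfold p1, p2 in *. nra. }
  destruct (HC (p1, p2) (Hp p1 p2 ltac:(rewrite Rminus_diag, Rabs_R0; apply Rabs_pos) ltac:(rewrite Rminus_diag, Rabs_R0; apply Rabs_pos))) as [_ [HD2 [HcD1 _]]].
  simpl in HD2. apply is_derive_Reals in HD2.
  destruct (HD2 (eps / 2) ltac:(lra)) as [d2 Hd2].
  destruct (proj1 (filterlim_locally _ _) HcD1 (mkposreal (eps / 2) ltac:(lra))) as [d1 Hd1].
  assert (Hpos : 0 < Rmin (Rmin d1 d2) (rho0 / 2)).
  { apply Rmin_glb_lt; [apply Rmin_glb_lt; apply cond_pos|lra]. }
  exists (mkposreal _ Hpos). intros h Hh0 Hh. simpl in Hh.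
  assert (Hhd1 : Rabs h < d1) by (eapply Rlt_le_trans; [exact Hh|]; eapply Rle_trans; [apply Rmin_l|apply Rmin_l]).
  assert (Hhd2 : Rabs h < d2) by (eapply Rlt_le_trans; [exact Hh|]; eapply Rle_trans; [apply Rmin_l|apply Rmin_r]).
  assert (Hhr : Rabs h < rho0 / 2) by (eapply Rlt_le_trans; [exact Hh|]; apply Rmin_r).
  set (y := p2 + h * s).
  assert (Hys : Rabs (y - p2) <= Rabs h).
  { unfold y. replace (p2 + h * s - p2) with (h * s) by ring. rewrite Rabs_mult. 
    pose proof (Rabs_pos h). nra. }
  assert (Hxc : Rabs (p1 + h * c - p1) <= Rabs h).
  { replace (p1 + h * c - p1) with (h * c) by ring. rewrite Rabs_mult. 
    pose proof (Rabs_pos h). nra. }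
  assert (Hrh : Rabs h <= Rabs (rho0 / 2)) by (rewrite (Rabs_pos_eq (rho0/2)) by lra; lra).
  destruct (MVT_gen (fun sg => D (sg, y)) p1 (p1 + h * c) (fun sg => D1 (sg, y))) as [xi [Hxi Exi]].
  - intros sg Hsg. 
    assert (Hne : (sg, y) <> (0, 0)).
    { apply Hp; [|lra]. pose proof (between_abs p1 (p1 + h * c) sg ltac:(lra)). lra. }
    destruct (HC _ Hne) as [H1 _]. exact H1.
  - intros sg Hsg. 
    assert (Hne : (sg, y) <> (0, 0)).
    { apply Hp; [|lra]. pose proof (between_abs p1 (p1 + h * c) sg Hsg). lra. }
    destruct (HC _ Hne) as [H1 _]. apply continuity_pt_filterlim.
    apply (ex_derive_continuous (fun sg => D (sg, y))). exists (D1 (sg, y)). exact H1.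
  - pose proof (between_abs p1 (p1 + h * c) xi Hxi) as Hxi'.
    replace ((rho0 + h) * c) with (p1 + h * c) by (unfold p1; ring).
    replace ((rho0 + h) * s) with y by (unfold y, p2; ring).
    fold p1 p2.
    assert (E : (D (p1 + h * c, y) - D (p1, p2)) / h
               = D1 (xi, y) * c + (D (p1, p2 + h * s) - D (p1, p2)) / h).
    { replace (D (p1 + h * c, y) - D (p1, p2)) with ((D (p1 + h * c, y) - D (p1, y)) + (D (p1, y) - D (p1, p2))) by ring.
      rewrite Exi. unfold y. field. auto. }
    rewrite E.
    assert (T1 : Rabs (D1 (xi, y) - D1 (p1, p2)) < eps / 2).
    { assert (B := Hd1 (xi, y)). simpl in B. 
      assert (Hb : ball (p1, p2) d1 (xi, y)).
      { split; simpl; apply ball_R; lra. }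
      specialize (B Hb). apply ball_R in B. exact B. }
    assert (T2 : Rabs ((D (p1, p2 + h * s) - D (p1, p2)) / h - D2 (p1, p2) * s) <= eps / 2).
    { destruct (Req_dec s 0) as [Es|Es].
      - rewrite Es. replace (p2 + h * 0) with p2 by ring. rewrite Rminus_diag.
        replace (0 / h - D2 (p1, p2) * 0) with 0 by (field; auto). rewrite Rabs_R0. lra.
      - assert (Hj : h * s <> 0) by (apply Rmult_integral_contrapositive; auto).
        assert (Hjd : Rabs (h * s) < d2) by (rewrite Rabs_mult; pose proof (Rabs_pos h); nra).
        specialize (Hd2 (h * s) Hj Hjd).
        replace ((D (p1, p2 + h * s) - D (p1, p2)) / h - D2 (p1, p2) * s)
          with (s * ((D (p1, p2 + h * s) - D (p1, p2)) / (h * s) - D2 (p1, p2))) by (field; auto).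
        rewrite Rabs_mult. pose proof (Rabs_pos ((D (p1, p2 + h * s) - D (p1, p2)) / (h * s) - D2 (p1, p2))). nra. }
    replace (D1 (xi, y) * c + (D (p1, p2 + h * s) - D (p1, p2)) / h - (D1 (p1, p2) * c + D2 (p1, p2) * s))
      with (c * (D1 (xi, y) - D1 (p1, p2)) + ((D (p1, p2 + h * s) - D (p1, p2)) / h - D2 (p1, p2) * s)) by ring.
    eapply Rle_lt_trans; [apply Rabs_triang|]. rewrite Rabs_mult.
    pose proof (Rabs_pos (D1 (xi, y) - D1 (p1, p2))). nra.
Qed.

Lemma alg_var (c s rho r1 w1 w2 w1' w2' w1'' w2'' dl g : R) : c ^ 2 + s ^ 2 = 1 -> 0 < rho ->
  w1'' + g * (c * r1) + dl * w1' = - w1 / rho ^ 3 + 3 * (rho * c * w1 + rho * s * w2) / rho ^ 5 * (rho * c) ->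
  w2'' + g * (s * r1) + dl * w2' = - w2 / rho ^ 3 + 3 * (rho * c * w1 + rho * s * w2) / rho ^ 5 * (rho * s) ->
  (-s * w1'' + c * w2'') + dl * (-s * w1' + c * w2') = - (-s * w1 + c * w2) / rho ^ 3 /\
  (c * w1'' + s * w2'') + g * r1 + dl * (c * w1' + s * w2') = 2 * (c * w1 + s * w2) / rho ^ 3.
Proof.
  intros Hcs Hr e1 e2. split.
  - transitivity (-s * (w1'' + g * (c * r1) + dl * w1') + c * (w2'' + g * (s * r1) + dl * w2')); [ring|].
    rewrite e1, e2. field. lra.
  - replace (g * r1) with (g * r1 * (c ^ 2 + s ^ 2)) by (rewrite Hcs; ring).
    transitivity (c * (w1'' + g * (c * r1) + dl * w1') + s * (w2'' + g * (s * r1) + dl * w2')); [ring|].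
    rewrite e1, e2. replace 2 with (3 * (c ^ 2 + s ^ 2) - 1) by (rewrite Hcs; ring). field. lra.
Qed.

Lemma alg_sol (c s rho a1 a2 v1 v2 dl : R) : c ^ 2 + s ^ 2 = 1 -> 0 < rho ->
  a1 + dl * v1 = - (rho * c) / rho ^ 3 -> a2 + dl * v2 = - (rho * s) / rho ^ 3 ->
  (c * a1 + s * a2) + dl * (c * v1 + s * v2) = - 1 / rho ^ 2.
Proof.
  intros Hcs Hr e1 e2.
  transitivity (c * (a1 + dl * v1) + s * (a2 + dl * v2)); [ring|]. rewrite e1, e2.
  replace (-1) with (- (c ^ 2 + s ^ 2)) by (rewrite Hcs; ring). field. lra.
Qed.

Lemma nrm_ray rho c s : c ^ 2 + s ^ 2 = 1 -> 0 < rho -> nrm (rho * c, rho * s) = rho.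
Proof.
  intros Hcs Hr. unfold nrm. cbn [fst snd].
  replace ((rho * c) ^ 2 + (rho * s) ^ 2) with (rho ^ 2) by (replace (rho ^ 2) with (rho ^ 2 * (c ^ 2 + s ^ 2)) by (rewrite Hcs; ring); ring).
  apply sqrt_pow2. lra.
Qed.

Lemma vproj a b (f g : R -> R * R) (c s : R) : vderiv_on a b f g ->
  deriv_on a b (fun t => c * fst (f t) + s * snd (f t)) (fun t => c * fst (g t) + s * snd (g t)).
Proof. intros [H1 H2]. apply deriv_plus; apply deriv_scal; auto. Qed.

Theorem lemma3p4 (D D1 D2 : R * R -> R) (T : R) (x : R -> R * R) :
  (forall p, p <> (0, 0) -> 0 <= D p) ->
  (exists M, forall p, p <> (0, 0) -> Rabs (D p) <= M) ->
  C1_punctured D D1 D2 ->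
  0 < T ->
  is_solution D T x ->
  rectilinear T x ->
  nondegenerate D D1 D2 T x.
Proof.
  intros HDpos [M HM] HC HT [Hnz [v0 [a0 [Hxv0 [Hva0 Heq]]]]] [w0 [r [Hw0 Hr]]].
  intros v Hxv w w' w'' Hww' Hw'w'' Hvar Hwa Hwb.
  destruct w0 as [c s]. unfold nrm in Hw0. simpl in Hr. change (sqrt (c ^ 2 + s ^ 2) = 1) in Hw0.
  assert (Hcs : c ^ 2 + s ^ 2 = 1).
  { assert (H := sqrt_sqrt (c ^ 2 + s ^ 2) ltac:(nra)). rewrite Hw0 in H. lra. }
  assert (Hab : -T < 0) by lra.
  set (rho := fun t => c * fst (x t) + s * snd (x t)).
  assert (Hx : forall t, -T <= t <= 0 -> x t = (rho t * c, rho t * s) /\ 0 < rho t).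
  { intros t Ht. destruct (Hr t Ht) as [Hp Hxt].
    assert (E : rho t = r t).
    { unfold rho. rewrite Hxt. cbn [fst snd]. 
      transitivity (r t * (c ^ 2 + s ^ 2)); [ring|]. rewrite Hcs. ring. }
    rewrite E. auto. }
  set (rho1 := fun t => c * fst (v0 t) + s * snd (v0 t)).
  set (rho2 := fun t => c * fst (a0 t) + s * snd (a0 t)).
  assert (Hrho : deriv_on (-T) 0 rho rho1) by apply (vproj _ _ x v0 c s Hxv0).
  assert (Hrho1 : deriv_on (-T) 0 rho1 rho2) by apply (vproj _ _ v0 a0 c s Hva0).
  assert (HQ : forall t, -T <= t <= 0 -> -s * fst (v0 t) + c * snd (v0 t) = 0).
  { intros t Ht. apply (deriv_unique (-T) 0 (fun t => -s * fst (x t) + c * snd (x t)) (fun t => -s * fst (v0 t) + c * snd (v0 t)) (fun _ => 0)); auto.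
    - apply (vproj _ _ x v0 (-s) c Hxv0).
    - apply (deriv_ext _ _ (fun _ => 0) (fun _ => 0)); [apply deriv_const| |auto].
      intros u Hu. destruct (Hx u Hu) as [-> _]. cbn [fst snd]. ring. }
  assert (Hvv0 : forall t, -T <= t <= 0 -> v t = v0 t).
  { intros t Ht. destruct Hxv as [Hv1 Hv2]. destruct Hxv0 as [Hv01 Hv02].
    apply injective_projections.
    - apply (deriv_unique _ _ _ _ _ Hab Hv1 Hv01 t Ht).
    - apply (deriv_unique _ _ _ _ _ Hab Hv2 Hv02 t Ht). }
  assert (Hv : forall t, -T <= t <= 0 -> fst (v t) = c * rho1 t /\ snd (v t) = s * rho1 t).
  { intros t Ht. rewrite Hvv0 by auto. pose proof (HQ t Ht) as HQt. unfold rho1. split.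
    - transitivity ((c ^ 2 + s ^ 2) * fst (v0 t)); [rewrite Hcs; ring|].
      transitivity (c * (c * fst (v0 t) + s * snd (v0 t)) - s * (-s * fst (v0 t) + c * snd (v0 t))); [ring|].
      rewrite HQt. ring.
    - transitivity ((c ^ 2 + s ^ 2) * snd (v0 t)); [rewrite Hcs; ring|].
      transitivity (s * (c * fst (v0 t) + s * snd (v0 t)) + c * (-s * fst (v0 t) + c * snd (v0 t))); [ring|].
      rewrite HQt. ring. }
  set (dl := fun t => D (x t)).
  assert (Hdl : forall t, -T <= t <= 0 -> 0 <= dl t <= M).
  { intros t Ht. unfold dl. split. apply HDpos, Hnz, Ht.
    eapply Rle_trans; [apply Rle_abs|apply HM, Hnz, Ht]. }
  assert (Hrho2 : forall t, -T <= t <= 0 -> rho2 t + dl t * rho1 t = - 1 / rho t ^ 2).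
  { intros t Ht. destruct (Hx t Ht) as [Hxt Hpt]. destruct (Heq t Ht) as [e1 e2].
    rewrite Hxt in e1, e2. rewrite nrm_ray in e1, e2 by auto. cbn [fst snd] in e1, e2.
    unfold rho2, rho1, dl. rewrite Hxt.
    apply alg_sol; auto. }
  set (A := fun t => c * fst (w t) + s * snd (w t)).
  set (A1 := fun t => c * fst (w' t) + s * snd (w' t)).
  set (A2 := fun t => c * fst (w'' t) + s * snd (w'' t)).
  set (B := fun t => -s * fst (w t) + c * snd (w t)).
  set (B1 := fun t => -s * fst (w' t) + c * snd (w' t)).
  set (B2 := fun t => -s * fst (w'' t) + c * snd (w'' t)).
  assert (HA : deriv_on (-T) 0 A A1) by apply (vproj _ _ w w' c s Hww').
  assert (HA1 : deriv_on (-T) 0 A1 A2) by apply (vproj _ _ w' w'' c s Hw'w'').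
  assert (HB : deriv_on (-T) 0 B B1) by apply (vproj _ _ w w' (-s) c Hww').
  assert (HB1 : deriv_on (-T) 0 B1 B2) by apply (vproj _ _ w' w'' (-s) c Hw'w'').
  set (gw := fun t => D1 (x t) * fst (w t) + D2 (x t) * snd (w t)).
  assert (HEQ : forall t, -T <= t <= 0 ->
    B2 t + dl t * B1 t = - B t / rho t ^ 3 /\ A2 t + gw t * rho1 t + dl t * A1 t = 2 * A t / rho t ^ 3).
  { intros t Ht. destruct (Hvar t Ht) as [e1 e2]. fold (gw t) in e1, e2.
    destruct (Hv t Ht) as [Ev1 Ev2]. rewrite Ev1 in e1. rewrite Ev2 in e2.
    destruct (Hx t Ht) as [Hxt Hpt]. fold (dl t) in e1, e2.
    unfold dot in e1, e2. rewrite Hxt in e1, e2. rewrite nrm_ray in e1, e2 by auto. cbn [fst snd] in e1, e2.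
    apply alg_var; auto. }
  assert (Hrpos : forall t, -T <= t <= 0 -> 0 < rho t) by (intros t Ht; apply (Hx t Ht)).
  set (W := fun t => B1 t * rho t - B t * rho1 t).
  assert (HW : deriv_on (-T) 0 W (fun t => - dl t * W t)).
  { apply (deriv_ext _ _ (fun t => B1 t * rho t + -1 * (B t * rho1 t))
      (fun t => (B2 t * rho t + B1 t * rho1 t) + -1 * (B1 t * rho1 t + B t * rho2 t))).
    - apply deriv_plus. apply deriv_mult; auto. apply deriv_scal, deriv_mult; auto.
    - intros; unfold W; ring.
    - intros t Ht. destruct (HEQ t Ht) as [E1 _]. pose proof (Hrho2 t Ht) as E2.
      pose proof (Hrpos t Ht).
      assert (B2 t = - dl t * B1 t - B t / rho t ^ 3) by lra.
      assert (rho2 t = - dl t * rho1 t - 1 / rho t ^ 2) by lra.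
      unfold W. rewrite H0, H1. field. lra. }
  assert (HWsq : deriv_on (-T) 0 (fun t => -1 * (W t * W t)) (fun t => -1 * ((- dl t * W t) * W t + W t * (- dl t * W t)))).
  { apply deriv_scal, deriv_mult; auto. }
  assert (HWe : deriv_on (-T) 0 (fun t => W t * W t * exp ((2 * M) * t))
     (fun t => ((- dl t * W t) * W t + W t * (- dl t * W t)) * exp ((2 * M) * t) + W t * W t * (exp ((2 * M) * t) * ((2 * M) * 1)))).
  { apply deriv_mult; [apply deriv_mult; auto|apply deriv_expM]. }
  assert (Hsig : exists sg, sg <> 0 /\ forall t, -T <= t <= 0 -> 0 <= sg * W t).
  { destruct (Req_dec (W (-T)) 0) as [HW0|HW0].
    - exists 1. split; [lra|]. intros t Ht.
      assert (Hm := mono _ _ _ _ (-T) t HWsq ltac:(lra) ltac:(lra) ltac:(lra)).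
      simpl in Hm. rewrite HW0 in Hm.
      assert (W t * W t <= 0).
      { assert (-1 * (0 * 0) <= -1 * (W t * W t)); [|lra]. apply Hm.
        intros z Hz. pose proof (Hdl z ltac:(lra)). nra. }
      assert (W t = 0) by nra. rewrite H0. lra.
    - exists (W (-T)). split; auto.
      assert (Hnz' : forall t, -T <= t <= 0 -> W t <> 0).
      { intros t Ht E.
        assert (Hm := mono _ _ _ _ (-T) t HWe ltac:(lra) ltac:(lra) ltac:(lra)).
        simpl in Hm. rewrite E in Hm.
        assert (W (-T) * W (-T) * exp (2 * M * - T) <= 0 * 0 * exp (2 * M * t)).
        { apply Hm. intros z Hz. pose proof (Hdl z ltac:(lra)). pose proof (exp_pos (2 * M * z)).
          replace ((- dl z * W z * W z + W z * (- dl z * W z)) * exp (2 * M * z) + W z * W z * (exp (2 * M * z) * (2 * M * 1)))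
            with (2 * (M - dl z) * (W z * W z) * exp (2 * M * z)) by ring.
          apply Rmult_le_pos; [|lra]. apply Rmult_le_pos; [lra|]. nra. }
        pose proof (exp_pos (2 * M * - T)).
        assert (0 < W (-T) * W (-T)) by (apply Rsqr_pos_lt; auto). nra. }
      intros t Ht. apply Rlt_le.
      apply (cont_ind_fwd (-T) 0 (fun t => W (-T) * W t) (-T)); auto; try lra.
      + apply (deriv_contR _ _ _ _ (deriv_scal _ _ (W (-T)) W _ HW)).
      + apply Rsqr_pos_lt; auto.
      + intros y Hy Hy'. specialize (Hy' y ltac:(lra)). simpl in Hy'.
        assert (W (-T) * W y <> 0) by (apply Rmult_integral_contrapositive; split; auto; apply Hnz'; lra).
        lra. }
  destruct Hsig as [sg [Hsg0 Hsg]].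
  set (q := fun t => B t * / rho t).
  assert (Hq : deriv_on (-T) 0 (fun t => sg * q t) (fun t => sg * (B1 t * / rho t + B t * ((- 1 / rho t ^ 2) * rho1 t)))).
  { apply deriv_scal. apply deriv_mult; auto.
    apply (deriv_chain _ _ (fun y => / y) (fun t => - 1 / rho t ^ 2)); auto.
    intros t Ht. pose proof (Hrpos t Ht). auto_derive. lra. field. lra. }
  assert (HBa : B (-T) = 0) by (unfold B; rewrite Hwa; simpl; ring).
  assert (HBb : B 0 = 0) by (unfold B; rewrite Hwb; simpl; ring).
  assert (HB0 : forall t, -T <= t <= 0 -> B t = 0).
  { intros t Ht.
    assert (Hder : forall z, -T <= z <= 0 -> 0 <= sg * (B1 z * / rho z + B z * ((- 1 / rho z ^ 2) * rho1 z))).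
    { intros z Hz. pose proof (Hsg z Hz). pose proof (Hrpos z Hz).
      replace (sg * (B1 z * / rho z + B z * ((- 1 / rho z ^ 2) * rho1 z))) with ((sg * W z) * / (rho z ^ 2))
        by (unfold W; field; lra).
      apply Rmult_le_pos; auto. apply Rlt_le, Rinv_0_lt_compat. nra. }
    assert (H1 := mono _ _ _ _ (-T) t Hq ltac:(lra) ltac:(lra) ltac:(lra) ltac:(intros; apply Hder; lra)).
    assert (H2 := mono _ _ _ _ t 0 Hq ltac:(lra) ltac:(lra) ltac:(lra) ltac:(intros; apply Hder; lra)).
    simpl in H1, H2. unfold q in H1, H2. rewrite HBa in H1. rewrite HBb in H2.
    assert (sg * (B t * / rho t) = 0) by lra.
    apply Rmult_integral in H. destruct H as [|H]; [contradiction|].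
    apply Rmult_integral in H. destruct H as [|H]; auto.
    pose proof (Rinv_neq_0_compat (rho t) ltac:(pose proof (Hrpos t Ht); lra)). contradiction. }
  set (G := fun t => D1 (rho t * c, rho t * s) * c + D2 (rho t * c, rho t * s) * s).
  assert (Hdl' : deriv_on (-T) 0 dl (fun t => G t * rho1 t)).
  { apply (deriv_ext _ _ (fun t => (fun y => D (y * c, y * s)) (rho t)) (fun t => G t * rho1 t)).
    - apply (deriv_chain (-T) 0 (fun y => D (y * c, y * s)) G rho rho1); auto. intros t Ht. apply ray_deriv; auto.
    - intros t Ht. unfold dl. destruct (Hx t Ht) as [-> _]. reflexivity.
    - auto. }
  set (U := fun t => A1 t + dl t * A t).
  assert (HU : deriv_on (-T) 0 U (fun t => (2 / rho t ^ 3) * A t)).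
  { apply (deriv_ext _ _ U (fun t => A2 t + (G t * rho1 t * A t + dl t * A1 t))).
    - apply deriv_plus; auto. apply deriv_mult; auto.
    - auto.
    - intros t Ht. destruct (HEQ t Ht) as [_ E]. pose proof (Hrpos t Ht).
      assert (Hgw : gw t = G t * A t).
      { unfold gw, G, A. destruct (Hx t Ht) as [-> _].
        pose proof (HB0 t Ht) as HBt. unfold B in HBt.
        assert (Ef : fst (w t) = c * (c * fst (w t) + s * snd (w t))).
        { transitivity ((c ^ 2 + s ^ 2) * fst (w t)); [rewrite Hcs; ring|].
          transitivity (c * (c * fst (w t) + s * snd (w t)) - s * (-s * fst (w t) + c * snd (w t))); [ring|].
          rewrite HBt. ring. }
        assert (Eg : snd (w t) = s * (c * fst (w t) + s * snd (w t))).
        { transitivity ((c ^ 2 + s ^ 2) * snd (w t)); [rewrite Hcs; ring|].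
          transitivity (s * (c * fst (w t) + s * snd (w t)) + c * (-s * fst (w t) + c * snd (w t))); [ring|].
          rewrite HBt. ring. }
        transitivity (D1 (rho t * c, rho t * s) * (c * (c * fst (w t) + s * snd (w t))) + D2 (rho t * c, rho t * s) * (s * (c * fst (w t) + s * snd (w t)))); [|ring].
        rewrite <- Ef, <- Eg. reflexivity. }
      rewrite Hgw in E. unfold Rdiv in *. lra. }
  assert (HA0 : forall t, -T <= t <= 0 -> A t = 0).
  { apply (step2 (-T) 0 A A1 U dl (fun t => 2 / rho t ^ 3) M); auto.
    - intros; unfold U; ring.
    - intros t Ht. pose proof (Hrpos t Ht). apply Rlt_le, Rdiv_lt_0_compat; [lra|]. apply pow_lt; auto.
    - unfold A; rewrite Hwa; simpl; ring.
    - unfold A; rewrite Hwb; simpl; ring. }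
  intros t Ht. pose proof (HA0 t Ht) as HAt. pose proof (HB0 t Ht) as HBt. unfold A in HAt. unfold B in HBt.
  apply injective_projections; simpl.
  - transitivity ((c ^ 2 + s ^ 2) * fst (w t)); [rewrite Hcs; ring|].
    transitivity (c * (c * fst (w t) + s * snd (w t)) - s * (-s * fst (w t) + c * snd (w t))); [ring|].
    rewrite HAt, HBt. ring.
  - transitivity ((c ^ 2 + s ^ 2) * snd (w t)); [rewrite Hcs; ring|].
    transitivity (s * (c * fst (w t) + s * snd (w t)) + c * (-s * fst (w t) + c * snd (w t))); [ring|].
    rewrite HAt, HBt. ring.
Qed.
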